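(* Let $n=2p$ with $p$ a positive integer, $a,b\in\mathbb{C}$, $b\ne0$, and let $A^{\dagger}$ be the $n\times n$ tridiagonal matrix with diagonal entries $a$ and $A^{\dagger}_{k,k+1}=A^{\dagger}_{k+1,k}=(-1)^{k+1}b$ for $k=1,\dots,n-1$. Let $\lambda_k^{\dagger}=a-2b\cos\left(\frac{k\pi}{n+1}\right)$, $\psi_k=\frac{\lambda_k^{\dagger}-a}{b}$ and $\eta_k=\frac{4-\psi_k^2}{2n+2}$ for $k=1,\dots,n$. Let $s$ be a nonnegative integer, or any integer if $A^{\dagger}$ is invertible. Then the entries $l_{ij}(s)$ of $(A^{\dagger})^s$ are $$l_{ij}(s)=\sum_{k=1}^{n}(\lambda_k^{\dagger})^{s}\eta_k\,r_{i-1}r_{j-1}\,U_{i-1}\left(\tfrac{\psi_k}{2}\right)U_{j-1}\left(\tfrac{\psi_k}{2}\right),\quad i,j=1,\dots,n.$$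
   Context: $U_m$ is the Chebyshev polynomial of the second kind: $U_0=1$, $U_1=2x$, $U_{m+1}=2xU_m-U_{m-1}$. For an integer $m\ge0$, $r_m=1$ if $m\equiv0,1\pmod4$ and $r_m=-1$ if $m\equiv2,3\pmod4$. *)

(* Defs.v *)
From HB Require Import structures.
From mathcomp Require Import all_boot all_order all_algebra.
From mathcomp Require Import complex.
From mathcomp Require Import reals trigo.
Set Implicit Arguments. Unset Strict Implicit. Unset Printing Implicit Defensive.
Import Order.TTheory GRing.Theory Num.Theory.
Local Open Scope ring_scope.

Fixpoint chebU_pair (T : nzRingType) (x : T) (m : nat) : T * T :=
  (* returns (U_m x, U_{m+1} x) *)
  match m with
  | 0%N => (1, 2 * x)
  | m'.+1 => let '(u, v) := chebU_pair x m' in (v, 2 * x * v - u)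
  end.
Definition chebU (T : nzRingType) (m : nat) (x : T) : T := (chebU_pair x m).1.

Definition rsign (T : nzRingType) (m : nat) : T :=
  if (m %% 4 < 2)%N then 1 else -1.

Definition mxpowz (T : comUnitRingType) (n : nat) (A : 'M[T]_n) (s : int)
  : 'M[T]_n :=
  match s with
  | Posz k => A ^+ k
  | Negz k => (invmx A) ^+ k.+1
  end.

(* The n x n tridiagonal matrix A^dagger, 0-based indices:
   diagonal a, and (k,k+1),(k+1,k) entries (-1)^(k+1) b for 1-based k,
   i.e. (-1)^i b for 0-based i with j = i+1. *)
Definition Adag (T : nzRingType) (n : nat) (a b : T) : 'M[T]_n :=
  \matrix_(i < n, j < n)
    if i == j then a
    else if (val j == (val i).+1)%N then (-1) ^+ (val i).+2 * b
    else if (val i == (val j).+1)%N then (-1) ^+ (val j).+2 * b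
    else 0.

Section Eig.
Variable R : realType.
Local Notation C := (R[i]).
Definition lamdag (n : nat) (a b : C) (k : nat) : C :=
  a - 2 * b * ((cos (k%:R * pi / (n.+1)%:R) : R)%:C)%C.
Definition psik (n : nat) (a b : C) (k : nat) : C := (lamdag n a b k - a) / b.
Definition etak (n : nat) (a b : C) (k : nat) : C :=
  (4 - psik n a b k ^+ 2) / (2 * n.+1)%:R.
End Eig.

(* Main.v *)
Require Import Defs.
From HB Require Import structures.
From mathcomp Require Import all_boot all_order all_algebra.
From mathcomp Require Import complex.
From mathcomp Require Import reals trigo.
From mathcomp Require Import ring lra zify.
Set Implicit Arguments. Unset Strict Implicit. Unset Printing Implicit Defensive.
Import Order.TTheory GRing.Theory Num.Theory.
Local Open Scope ring_scope.


Section Cheb.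
Variable T : comNzRingType.
Implicit Types x y : T.

Lemma chebU0 x : chebU 0 x = 1. Proof. by []. Qed.
Lemma chebU1 x : chebU 1 x = 2 * x. Proof. by []. Qed.
Lemma chebU_pairE x m : chebU_pair x m = (chebU m x, chebU m.+1 x).
Proof.
by rewrite /chebU /=; case: (chebU_pair x m).
Qed.
Lemma chebUSS x m : chebU m.+2 x = 2 * x * chebU m.+1 x - chebU m x.
Proof. by rewrite {1}/chebU /= chebU_pairE. Qed.

Lemma cheb_cassini x m :
  chebU m x ^+ 2 - 2 * x * chebU m x * chebU m.+1 x + chebU m.+1 x ^+ 2 = 1 :> T.
Proof.
elim: m => [|m IH]; first by rewrite chebU0 chebU1; ring.
rewrite chebUSS -[RHS]IH; ring.
Qed.

Lemma cheb_sumsq x m :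
  4 * (1 - x ^+ 2) * \sum_(i < m) chebU i x ^+ 2 =
  (2 * m + 1)%:R - chebU m x ^+ 2 + (2 * x * chebU m x - chebU m.+1 x) ^+ 2 :> T.
Proof.
elim: m => [|m IH]; first by rewrite big_ord0 chebU0 chebU1; ring.
rewrite big_ord_recr /= mulrDr IH chebUSS.
have H := cheb_cassini x m.
set u := chebU m x in H *; set v := chebU m.+1 x in H *.
have -> : (2 * m.+1 + 1)%:R = (2 * m + 1)%:R + 2 :> T.
  by rewrite -natrD; congr _%:R; lia.
apply/eqP; rewrite -subr_eq0; apply/eqP.
transitivity (2 * (u ^+ 2 - 2 * x * u * v + v ^+ 2 - 1)); first ring.
by rewrite H subrr mulr0.
Qed.

Lemma cheb_CD x y m :
  2 * (x - y) * \sum_(i < m) chebU i x * chebU i y =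
  chebU m x * (2 * y * chebU m y - chebU m.+1 y)
  - (2 * x * chebU m x - chebU m.+1 x) * chebU m y :> T.
Proof.
elim: m => [|m IH]; first by rewrite big_ord0 !chebU0 !chebU1; ring.
rewrite big_ord_recr /= mulrDr IH !chebUSS; ring.
Qed.

End Cheb.

Lemma chebU_rmorph (T S : comNzRingType) (f : {rmorphism T -> S}) x m :
  chebU m (f x) = f (chebU m x).
Proof.
suff: chebU m (f x) = f (chebU m x) /\ chebU m.+1 (f x) = f (chebU m.+1 x) by case.
elim: m => [|m [IH1 IH2]]; first by rewrite !chebU0 !chebU1 rmorph1 rmorphM rmorph_nat.
by split => //; rewrite (chebUSS (f x)) IH1 IH2 chebUSS rmorphB !rmorphM rmorph_nat.
Qed.


Section Trig.
Variable R : realType.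

Lemma chebU_sin (t : R) m : chebU m (cos t) * sin t = sin (m.+1%:R * t).
Proof.
suff: chebU m (cos t) * sin t = sin (m.+1%:R * t) /\
      chebU m.+1 (cos t) * sin t = sin (m.+2%:R * t) by case.
elim: m => [|m [IH1 IH2]].
  rewrite chebU0 chebU1 mul1r mul1r; split => //.
  by rewrite [in RHS]mulr_natl sin_mulr2n -mulr_natl; ring.
split => //.
rewrite chebUSS; transitivity (2 * cos t * (chebU m.+1 (cos t) * sin t) - chebU m (cos t) * sin t); first ring.
rewrite IH2 IH1.
have e1 : m.+3%:R * t = m.+2%:R * t + t by rewrite -[m.+3]addn1 natrD mulrDl mul1r.
have e2 : m.+1%:R * t = m.+2%:R * t - t by rewrite -[m.+2]addn1 natrD mulrDl mul1r addrK.
rewrite e1 e2 !sinD sinN cosN; ring.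
Qed.

Lemma sin_natpi k : sin (k%:R * pi) = 0 :> R.
Proof.
have := alternatingn (@sinDpi R) k 0.
by rewrite add0r sin0 mulr0 mulr_natl.
Qed.

Definition thetak (n k : nat) : R := k.+1%:R * pi / n.+1%:R.

Lemma thetak_itv n k : (k < n)%N -> 0 < thetak n k < pi.
Proof.
move=> kn; rewrite /thetak; apply/andP; split.
  by rewrite divr_gt0 // mulr_gt0 // ?ltr0n // pi_gt0.
rewrite ltr_pdivrMr ?ltr0n // mulrC ltr_pM2l ?pi_gt0 // ltr_nat; lia.
Qed.

Lemma chebU_root n k : (k < n)%N -> chebU n (cos (thetak n k)) = 0.
Proof.
move=> kn; have /andP[t0 tpi] := thetak_itv kn.
have s0 : 0 < sin (thetak n k) by apply: sin_gt0_pi; rewrite t0 tpi.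
have := chebU_sin (thetak n k) n.
have -> : n.+1%:R * thetak n k = k.+1%:R * pi.
  by rewrite /thetak mulrC divfK // pnatr_eq0.
rewrite sin_natpi => /eqP; rewrite mulf_eq0 (gt_eqF s0) orbF => /eqP //.
Qed.

Lemma cos_thetak_inj n k l : (k < n)%N -> (l < n)%N ->
  cos (thetak n k) = cos (thetak n l) -> k = l.
Proof.
move=> kn ln /cos_inj.
have /andP[k0 kpi] := thetak_itv kn; have /andP[l0 lpi] := thetak_itv ln.
rewrite !in_itv /= !ltW // => /(_ isT isT).
rewrite /thetak => /(mulIf _) => /(_ _) H.
have : k.+1%:R * pi = l.+1%:R * pi :> R.
  by apply: H; rewrite invr_eq0 pnatr_eq0.
by move/(mulIf (lt0r_neq0 (@pi_gt0 R))) => /eqP; rewrite eqr_nat => /eqP [].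
Qed.
End Trig.


Section Mx.
Variable F : fieldType.
Variable n : nat.
Implicit Types (V W A : 'M[F]_n) (d e : 'rV[F]_n).

Lemma diag_mulmx d e : diag_mx d *m diag_mx e = diag_mx (\row_k (d 0 k * e 0 k)).
Proof.
apply/matrixP => i j; rewrite mul_diag_mx !mxE.
by case: eqP => [->|]; rewrite ?mulr1n ?mulr0n ?mulr0.
Qed.

Lemma VDW_entry V W d i j :
  (V *m diag_mx d *m W) i j = \sum_k V i k * d 0 k * W k j.
Proof.
rewrite mul_mx_diag mxE; apply: eq_bigr => k _; by rewrite mxE.
Qed.

Lemma diag1 : diag_mx (\row_(k < n) (1 : F)) = 1%:M.
Proof. by apply/matrixP => i j; rewrite !mxE. Qed.

Lemma VDW_pow V W d m : W *m V = 1%:M ->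
  (V *m diag_mx d *m W) ^+ m = V *m diag_mx (\row_k (d 0 k ^+ m)) *m W.
Proof.
move=> WV; have VW := mulmx1C WV.
elim: m => [|m IH].
  rewrite expr0.
  have -> : \row_k (d 0 k ^+ 0) = \row_(k < n) (1 : F) by apply/rowP => k; rewrite !mxE.
  by rewrite diag1 mulmx1 VW.
rewrite exprS IH -mulmxE.
rewrite -!mulmxA (mulmxA W V) WV mul1mx (mulmxA (diag_mx d)) diag_mulmx.
by congr (V *m (diag_mx _ *m W)); apply/rowP => k; rewrite !mxE exprS.
Qed.

Lemma VDW_inv V W d : W *m V = 1%:M -> V *m diag_mx d *m W \in unitmx ->
  invmx (V *m diag_mx d *m W) = V *m diag_mx (\row_k (d 0 k)^-1) *m W.
Proof.
move=> WV U; have VW := mulmx1C WV.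
have [Wu Vu] := mulmx1_unit WV.
have Du : diag_mx d \in unitmx.
  have -> : diag_mx d = W *m (V *m diag_mx d *m W) *m V.
    by rewrite !mulmxA WV mul1mx -mulmxA WV mulmx1.
  by rewrite unitmx_mul (unitmx_mul W) Wu U Vu.
have dnz k : d 0 k != 0.
  move: Du; rewrite unitmxE det_diag unitfE => /prodf_neq0 /(_ k isT) //.
set B := V *m diag_mx (\row_k (d 0 k)^-1) *m W.
have AB : (V *m diag_mx d *m W) *m B = 1%:M.
  rewrite /B -!mulmxA (mulmxA W V) WV mul1mx (mulmxA (diag_mx d)) diag_mulmx.
  set D := diag_mx _; have -> : D = 1%:M.
    rewrite -diag1; congr diag_mx; apply/rowP => k; by rewrite !mxE mulfV.
  by rewrite mul1mx VW.
by rewrite -[RHS]mul1mx -(mulVmx U) -(mulmxA _ _ B) AB mulmx1.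
Qed.
End Mx.


Section Signs.
Variable T : comNzRingType.

Lemma rsign4 m : rsign T m.+4 = rsign T m.
Proof. by rewrite /rsign -addn4 modnDr. Qed.

Lemma rsign_sq m : rsign T m * rsign T m = 1.
Proof. by rewrite /rsign; case: ifP => _; rewrite ?mulr1 ?mulrNN ?mulr1. Qed.

Lemma m1exp4 m : (-1) ^+ m.+4 = (-1) ^+ m :> T.
Proof. by rewrite !exprS !mulN1r !opprK. Qed.

Lemma m1exp2 m : (-1) ^+ m.+2 = (-1) ^+ m :> T.
Proof. by rewrite !exprS !mulN1r !opprK. Qed.

Lemma rsignS1 m : (-1) ^+ m * rsign T m.+1 = rsign T m.
Proof.
elim/ltn_ind: m => -[|[|[|[|m]]]] IH; try by rewrite /rsign /=; ring.
by rewrite -[m.+4.+1]/(m.+1.+4) m1exp4 !rsign4 IH //; lia.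
Qed.

Lemma rsignS2 m : (-1) ^+ m * rsign T m = rsign T m.+1.
Proof.
elim/ltn_ind: m => -[|[|[|[|m]]]] IH; try by rewrite /rsign /=; ring.
by rewrite -[m.+4.+1]/(m.+1.+4) m1exp4 !rsign4 IH //; lia.
Qed.

Lemma chebU_opp (x : T) m : chebU m (-x) = (-1) ^+ m * chebU m x.
Proof.
suff: chebU m (-x) = (-1) ^+ m * chebU m x /\
      chebU m.+1 (-x) = (-1) ^+ m.+1 * chebU m.+1 x by case.
elim: m => [|m [IH1 IH2]]; first by rewrite !chebU0 !chebU1; split; ring.
split => //; rewrite !chebUSS IH1 IH2 m1exp2 !exprS; ring.
Qed.
End Signs.


Section Main.
Variable R : realType.
Local Notation C := (R[i]).

Lemma sum_delta n (F : nat -> C) m :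
  \sum_(j < n) (if (val j == m)%N then F j else 0) = if (m < n)%N then F m else 0.
Proof.
case: ltnP => H.
  rewrite (bigD1 (Ordinal H)) //= eqxx big1 ?addr0 // => j.
  by rewrite -val_eqE /= => /negbTE ->.
by rewrite big1 // => j _; rewrite ifF //; apply/negbTE; apply/eqP => E;
  move: (ltn_ord j); rewrite E ltnNge H.
Qed.

Lemma U_root_C n k : (k < n)%N ->
  chebU n (- ((cos (thetak R n k))%:C)%C) = 0 :> C.
Proof.
move=> kn; rewrite -rmorphN chebU_rmorph chebU_opp chebU_root // mulr0.
by rewrite rmorph0.
Qed.

Variables (n : nat) (a b : C).
Hypothesis bnz : b != 0.

Definition yk (k : nat) : C := psik n a b k.+1 / 2.

Lemma ykE k : yk k = - ((cos (thetak R n k))%:C)%C.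
Proof.
rewrite /yk /psik /lamdag /thetak.
set c := ((cos _)%:C)%C.
by field.
Qed.

Lemma lamE k : lamdag n a b k.+1 = a + 2 * b * yk k.
Proof. by rewrite ykE /lamdag /thetak; ring. Qed.

Lemma etaE k : etak n a b k.+1 = 4 * (1 - yk k ^+ 2) / (2 * n.+1)%:R.
Proof.
have hp : psik n a b k.+1 = 2 * yk k by rewrite /yk; field.
by rewrite /etak hp; field; rewrite addrC natr1 pnatr_eq0.
Qed.

Lemma yk_root k : (k < n)%N -> chebU n (yk k) = 0.
Proof. by move=> kn; rewrite ykE U_root_C. Qed.

Lemma yk_inj k l : (k < n)%N -> (l < n)%N -> yk k = yk l -> k = l.
Proof.
move=> kn ln; rewrite !ykE => /oppr_inj /complexI.
exact: cos_thetak_inj.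
Qed.

Lemma orth k l : (k < n)%N -> (l < n)%N ->
  etak n a b k.+1 * \sum_(j < n) chebU j (yk k) * chebU j (yk l) = (k == l)%:R.
Proof.
move=> kn ln; case: eqP => [<-|kl].
  have H := cheb_sumsq (yk k) n.
  have Hc := cheb_cassini (yk k) n.
  rewrite yk_root // in H Hc.
  under eq_bigr do rewrite -expr2.
  rewrite etaE mulrAC H.
  have -> : ((2 * n + 1)%:R - 0 ^+ 2 + (2 * yk k * 0 - chebU n.+1 (yk k)) ^+ 2 : C)
     = (2 * n.+1)%:R.
    transitivity ((2 * n + 1)%:R + (0 ^+ 2 - 2 * yk k * 0 * chebU n.+1 (yk k) + chebU n.+1 (yk k) ^+ 2) : C); first ring.
    by rewrite Hc natr1; congr _%:R; lia.
  by rewrite divff // pnatr_eq0.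
have H := cheb_CD (yk k) (yk l) n.
rewrite !yk_root // in H.
have : 2 * (yk k - yk l) * \sum_(j < n) chebU j (yk k) * chebU j (yk l) = 0.
  by rewrite H; ring.
move/eqP; rewrite mulf_eq0 mulf_eq0 pnatr_eq0 /= subr_eq0 => /orP [/eqP /(yk_inj kn ln) //|/eqP ->].
by rewrite mulr0.
Qed.

Definition Vm : 'M[C]_n := \matrix_(i < n, k < n) (rsign C i * chebU i (yk k)).
Definition Wm : 'M[C]_n :=
  \matrix_(k < n, j < n) (etak n a b k.+1 * rsign C j * chebU j (yk k)).
Definition dv : 'rV[C]_n := \row_(k < n) lamdag n a b k.+1.

Lemma WV : Wm *m Vm = 1%:M.
Proof.
apply/matrixP => k l; rewrite !mxE.
transitivity (etak n a b k.+1 * \sum_(j < n) chebU j (yk k) * chebU j (yk l)).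
  rewrite mulr_sumr; apply: eq_bigr => j _; rewrite !mxE.
  transitivity (etak n a b k.+1 * (chebU j (yk k) * chebU j (yk l)) *
    (rsign C j * rsign C j)); first ring.
  by rewrite rsign_sq mulr1.
by rewrite orth // -val_eqE.
Qed.

Lemma Adag_point (f : nat -> C) (i j : nat) :
  (if i == j then a else if j == i.+1 then (-1) ^+ i.+2 * b
   else if i == j.+1 then (-1) ^+ j.+2 * b else 0) * f j =
  (if j == i then a * f i else 0) + (if j == i.+1 then (-1) ^+ i * b * f i.+1 else 0)
  + (if i == j.+1 then (-1) ^+ j * b * f j else 0).
Proof.
rewrite !m1exp2 (eq_sym j i).
case E1: (i == j); case E2: (j == i.+1); case E3: (i == j.+1); try (exfalso; lia);
  rewrite ?addr0 ?add0r ?mul0r //.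
- by move/eqP: E1 => ->.
- by move/eqP: E2 => ->.
Qed.

Lemma AV : Adag n a b *m Vm = Vm *m diag_mx dv.
Proof.
apply/matrixP => i k; rewrite mul_mx_diag !mxE.
set f := fun j : nat => rsign C j * chebU j (yk k).
have fn : f n = 0 by rewrite /f yk_root // mulr0.
transitivity (\sum_(j < n) (if i == j :> nat then a else if j == i.+1 :> nat then (-1) ^+ i.+2 * b
   else if i == j.+1 :> nat then (-1) ^+ j.+2 * b else 0) * f j).
  by apply: eq_bigr => j _; rewrite !mxE.
under eq_bigr do rewrite Adag_point.
rewrite !big_split /= (sum_delta _ (fun _ => a * f i)) (sum_delta _ (fun _ => (-1) ^+ i * b * f i.+1)) ltn_ord.
have -> : (if (i.+1 < n)%N then (-1) ^+ i * b * f i.+1 else 0) = (-1) ^+ i * b * f i.+1.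
  case: ltnP => // H; have -> : i.+1 = n by have := ltn_ord i; lia.
  by rewrite fn mulr0.
rewrite -/(f i) lamE.
case: i => -[|i] Hi /=.
  rewrite big1 // /f /rsign /= ?chebU0 ?chebU1; ring.
under eq_bigr do rewrite eqSS (eq_sym i).
rewrite (sum_delta _ (fun j => (-1) ^+ j * b * f j)) (ltnW Hi).
transitivity (a * f i.+1 + b * ((-1) ^+ i.+1 * rsign C i.+2) * chebU i.+2 (yk k) +
  b * ((-1) ^+ i * rsign C i) * chebU i (yk k)); first by rewrite /f; ring.
rewrite rsignS1 rsignS2 chebUSS /f; ring.
Qed.

Lemma mainGen (s : int) (i j : 'I_n) :
  (0 <= s \/ Adag n a b \in unitmx) ->
  mxpowz (Adag n a b) s i j =
    \sum_(k < n)
      lamdag n a b k.+1 ^ s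
      * etak n a b k.+1 * rsign _ i * rsign _ j
      * chebU i (psik n a b k.+1 / 2)
      * chebU j (psik n a b k.+1 / 2).
Proof.
have Aeq : Adag n a b = Vm *m diag_mx dv *m Wm.
  by rewrite -AV -mulmxA (mulmx1C WV) mulmx1.
case: s => m H; rewrite /mxpowz Aeq.
  rewrite VDW_pow ?WV // VDW_entry; apply: eq_bigr => k _; rewrite !mxE /yk /= -exprnP.
  ring.
have U : Vm *m diag_mx dv *m Wm \in unitmx.
  by case: H => //; rewrite -Aeq.
rewrite VDW_inv ?WV // VDW_pow ?WV // VDW_entry; apply: eq_bigr => k _.
rewrite !mxE /yk /= exprVn.
change (lamdag n a b k.+1 ^ Negz m) with ((lamdag n a b k.+1 ^+ m.+1)^-1).
ring.
Qed.

End Main.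

Theorem mainTheorem4 (R : realType) (p : nat) (a b : R[i]) (s : int) :
  (0 < p)%N -> b != 0 ->
  (0 <= s \/ Adag (2 * p) a b \in unitmx) ->
  forall i j : 'I_(2 * p),
    mxpowz (Adag (2 * p) a b) s i j =
    \sum_(k < 2 * p)
      lamdag (2 * p) a b k.+1 ^ s
      * etak (2 * p) a b k.+1 * rsign _ i * rsign _ j
      * chebU i (psik (2 * p) a b k.+1 / 2)
      * chebU j (psik (2 * p) a b k.+1 / 2).
Proof.
move=> _ bnz H i j; exact: mainGen.
Qed.
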